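(* Let $\omega$ be a general obstacle that does not have a cross, and let $S^*$ be a minimum skeleton for $\omega$. Then $|S^*|\geq 3$.
   Context: An obstacle $\omega$ is a simple polygon in $\mathbb{R}^2$ (a closed, bounded polygonal region without holes whose boundary does not intersect itself), assumed in general position (no three of its vertices are collinear); vertices and edges of $\omega$ are those of its boundary. $\omega$ is rectilinear if each edge is horizontal or vertical, and a rectilinear obstacle is rectilinearly-convex if any two points of $\omega$ can be joined by a shortest rectilinear path (made of horizontal and vertical segments, of minimum $\ell_1$ length) contained in $\omega$. A corner point of a rectilinear path is a point where a horizontal and a vertical segment of the path meet. A set $S$ of closed line segments is inside $\omega$ if the union of its elements is contained in $\omega$. Such an $S$ is a skeleton for $\omega$ if for every pair of points $p,q$ not in the interior of $\omega$ such that every shortest rectilinear path between $p$ and $q$ with at most one corner point meets the interior of $\omega$, each such path intersects some element of $S$; a minimum skeleton is one with the fewest segments and $|S|$ is the number of segments. $B(\omega)$ is the smallest closed axis-parallel rectangle containing $\omega$; the extreme edges are the edges of $\omega$ lying on the boundary of $B(\omega)$ (exactly four: left, right, bottom, top); an extreme corner is a vertex of $\omega$ that is a common endpoint of two extreme edges. A general obstacle is a rectilinearly-convex obstacle with no extreme corners. A cross of $\omega$ is a pair $\{s_H,s_V\}$ of line segments contained in $\omega$, where $s_H$ has one endpoint on each of the two horizontal extreme edges and $s_V$ has one endpoint on each of the two vertical extreme edges. *)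

(* Defs.v *)
From Stdlib Require Import Reals List Arith.
Import ListNotations.
Open Scope R_scope.

Definition point := (R * R)%type.

Definition seg (a b : point) (p : point) : Prop :=
  exists t, 0 <= t <= 1 /\
    fst p = fst a + t * (fst b - fst a) /\
    snd p = snd a + t * (snd b - snd a).

Definition vtx (vs : list point) (i : nat) : point := nth i vs (0, 0).
Definition enext (vs : list point) (i : nat) : nat := (S i mod length vs)%nat.
Definition on_edge (vs : list point) (i : nat) (p : point) : Prop :=
  seg (vtx vs i) (vtx vs (enext vs i)) p.

Definition on_boundary (vs : list point) (p : point) : Prop :=
  exists i, (i < length vs)%nat /\ on_edge vs i p.

Definition collinear (a b c : point) : Prop :=
  (fst b - fst a) * (snd c - snd a) - (snd b - snd a) * (fst c - fst a) = 0.

Definition general_position (vs : list point) : Prop :=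
  forall i j k, (i < length vs)%nat -> (j < length vs)%nat -> (k < length vs)%nat ->
    i <> j -> j <> k -> i <> k -> ~ collinear (vtx vs i) (vtx vs j) (vtx vs k).

Definition simple_boundary (vs : list point) : Prop :=
  (3 <= length vs)%nat /\ NoDup vs /\
  forall i j, (i < length vs)%nat -> (j < length vs)%nat -> i <> j ->
    forall p, on_edge vs i p -> on_edge vs j p ->
      (j = enext vs i /\ p = vtx vs j) \/ (i = enext vs j /\ p = vtx vs i).

(** points of the bounded component of the complement of the boundary:
    not on the boundary, and continuous paths avoiding the boundary cannot
    go arbitrarily far *)
Definition inside (vs : list point) (p : point) : Prop :=
  ~ on_boundary vs p /\
  exists M, forall f g : R -> R,
    (forall t, continuity_pt f t) -> (forall t, continuity_pt g t) ->
    f 0 = fst p -> g 0 = snd p ->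
    (forall t, 0 <= t <= 1 -> ~ on_boundary vs (f t, g t)) ->
    Rabs (f 1) + Rabs (g 1) <= M.

(** the obstacle: closed bounded region enclosed by the polygon *)
Definition region (vs : list point) (p : point) : Prop :=
  on_boundary vs p \/ inside vs p.

Definition simple_polygon (vs : list point) : Prop :=
  simple_boundary vs /\ general_position vs.

Definition interior (A : point -> Prop) (p : point) : Prop :=
  exists eps, 0 < eps /\ forall q,
    Rabs (fst q - fst p) < eps -> Rabs (snd q - snd p) < eps -> A q.

Definition rectilinear (vs : list point) : Prop :=
  forall i, (i < length vs)%nat ->
    fst (vtx vs i) = fst (vtx vs (enext vs i)) \/
    snd (vtx vs i) = snd (vtx vs (enext vs i)).

Definition l1 (a b : point) : R := Rabs (fst a - fst b) + Rabs (snd a - snd b).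

Fixpoint rpath (l : list point) : Prop :=
  match l with
  | a :: ((b :: _) as t) => (fst a = fst b \/ snd a = snd b) /\ rpath t
  | _ => True
  end.

Fixpoint plen (l : list point) : R :=
  match l with
  | a :: ((b :: _) as t) => l1 a b + plen t
  | _ => 0
  end.

Fixpoint path_in (A : point -> Prop) (l : list point) : Prop :=
  match l with
  | a :: ((b :: _) as t) => (forall p, seg a b p -> A p) /\ path_in A t
  | [a] => A a
  | [] => True
  end.

Definition rect_convex (A : point -> Prop) : Prop :=
  forall p q, A p -> A q -> exists m,
    last (p :: m) p = q /\ rpath (p :: m) /\ plen (p :: m) = l1 p q /\
    path_in A (p :: m).

Definition left_edge (vs : list point) (i : nat) : Prop :=
  (i < length vs)%nat /\ fst (vtx vs i) = fst (vtx vs (enext vs i)) /\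
  forall q, region vs q -> fst (vtx vs i) <= fst q.
Definition right_edge (vs : list point) (i : nat) : Prop :=
  (i < length vs)%nat /\ fst (vtx vs i) = fst (vtx vs (enext vs i)) /\
  forall q, region vs q -> fst q <= fst (vtx vs i).
Definition bottom_edge (vs : list point) (i : nat) : Prop :=
  (i < length vs)%nat /\ snd (vtx vs i) = snd (vtx vs (enext vs i)) /\
  forall q, region vs q -> snd (vtx vs i) <= snd q.
Definition top_edge (vs : list point) (i : nat) : Prop :=
  (i < length vs)%nat /\ snd (vtx vs i) = snd (vtx vs (enext vs i)) /\
  forall q, region vs q -> snd q <= snd (vtx vs i).
Definition extreme_edge (vs : list point) (i : nat) : Prop :=
  left_edge vs i \/ right_edge vs i \/ bottom_edge vs i \/ top_edge vs i.

Definition is_endpoint (vs : list point) (i : nat) (v : point) : Prop :=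
  v = vtx vs i \/ v = vtx vs (enext vs i).

Definition has_extreme_corner (vs : list point) : Prop :=
  exists i j v, i <> j /\ extreme_edge vs i /\ extreme_edge vs j /\
    (exists k, (k < length vs)%nat /\ v = vtx vs k) /\
    is_endpoint vs i v /\ is_endpoint vs j v.

Definition general_obstacle (vs : list point) : Prop :=
  simple_polygon vs /\ rectilinear vs /\ rect_convex (region vs) /\
  ~ has_extreme_corner vs.

Definition seg_inside (A : point -> Prop) (a b : point) : Prop :=
  forall p, seg a b p -> A p.

Definition has_cross (vs : list point) : Prop :=
  (exists a b i j, a <> b /\ seg_inside (region vs) a b /\
     bottom_edge vs i /\ top_edge vs j /\ on_edge vs i a /\ on_edge vs j b) /\
  (exists c d i j, c <> d /\ seg_inside (region vs) c d /\
     left_edge vs i /\ right_edge vs j /\ on_edge vs i c /\ on_edge vs j d).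

(** the (point sets of the) shortest rectilinear paths from p to q with at
    most one corner point: p -> c -> q with c = (q.x, p.y) or (p.x, q.y) *)
Definition lcorner (p q c : point) : Prop :=
  c = (fst q, snd p) \/ c = (fst p, snd q).
Definition lpath (p q c : point) (x : point) : Prop := seg p c x \/ seg c q x.

Definition is_skeleton (vs : list point) (S : list (point * point)) : Prop :=
  (forall s, In s S -> fst s <> snd s /\ seg_inside (region vs) (fst s) (snd s)) /\
  forall p q, ~ interior (region vs) p -> ~ interior (region vs) q ->
    (forall c, lcorner p q c -> exists x, lpath p q c x /\ interior (region vs) x) ->
    forall c, lcorner p q c ->
      exists s x, In s S /\ lpath p q c x /\ seg (fst s) (snd s) x.

(** the list enumerates pairwise distinct segments, so |S| = length S *)
Definition distinct_segs (S : list (point * point)) : Prop :=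
  forall i j, (i < length S)%nat -> (j < length S)%nat -> i <> j ->
    let si := nth i S ((0,0),(0,0)) in let sj := nth j S ((0,0),(0,0)) in
    exists x, ~ (seg (fst si) (snd si) x <-> seg (fst sj) (snd sj) x).

Definition min_skeleton (vs : list point) (S : list (point * point)) : Prop :=
  is_skeleton vs S /\ distinct_segs S /\
  forall S', is_skeleton vs S' -> distinct_segs S' -> (length S <= length S')%nat.

(* Main.v *)
Require Import Defs.
From Stdlib Require Import Reals List Arith.
From Stdlib Require Import Lra Lia Psatz Classical.
Import ListNotations.
Open Scope R_scope.

Lemma enext_eq vs i : (i < length vs)%nat ->
  enext vs i = (if Nat.eqb (S i) (length vs) then 0 else S i)%nat.
Proof.
  intro H. unfold enext. destruct (Nat.eqb_spec (S i) (length vs)) as [E|E].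
  - rewrite E. apply Nat.Div0.mod_same.
  - apply Nat.mod_small. lia.
Qed.

Lemma enext_lt vs i : (i < length vs)%nat -> (enext vs i < length vs)%nat.
Proof. intro H. rewrite enext_eq by exact H. destruct (Nat.eqb_spec (S i) (length vs)); lia. Qed.

Definition prev (vs : list point) (j : nat) : nat :=
  if Nat.eqb j 0 then (length vs - 1)%nat else (j - 1)%nat.

Lemma prev_lt vs j : (j < length vs)%nat -> (prev vs j < length vs)%nat.
Proof. unfold prev. destruct (Nat.eqb_spec j 0); lia. Qed.

Lemma enext_prev vs j : (j < length vs)%nat -> enext vs (prev vs j) = j.
Proof.
  intro H. rewrite enext_eq by (apply prev_lt; exact H). unfold prev.
  destruct (Nat.eqb_spec j 0).
  - replace (S (length vs - 1)) with (length vs) by lia. rewrite Nat.eqb_refl. lia.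
  - destruct (Nat.eqb_spec (S (j - 1)) (length vs)); lia.
Qed.

Lemma enext_neq vs j : (2 <= length vs)%nat -> (j < length vs)%nat -> enext vs j <> j.
Proof. intros H2 H. rewrite enext_eq by exact H. destruct (Nat.eqb_spec (S j) (length vs)); lia. Qed.

Lemma prev_neq vs j : (2 <= length vs)%nat -> (j < length vs)%nat -> prev vs j <> j.
Proof. intros H2 H. unfold prev. destruct (Nat.eqb_spec j 0); lia. Qed.

Lemma prev_enext_neq vs j : (3 <= length vs)%nat -> (j < length vs)%nat -> prev vs j <> enext vs j.
Proof. intros H2 H. rewrite enext_eq by exact H. unfold prev.
  destruct (Nat.eqb_spec j 0); destruct (Nat.eqb_spec (S j) (length vs)); lia. Qed.

Lemma seg_start a b : seg a b a.
Proof. exists 0. split; [lra|]. split; ring. Qed.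
Lemma seg_end a b : seg a b b.
Proof. exists 1. split; [lra|]. split; ring. Qed.
Lemma seg_sym a b z : seg a b z -> seg b a z.
Proof. intros [t [Ht [H1 H2]]]. exists (1 - t). split; [lra|]. rewrite H1, H2. split; ring. Qed.

Lemma vtx_region vs i : (i < length vs)%nat -> region vs (vtx vs i).
Proof. intro H. left. exists i. split; [exact H|]. apply seg_start. Qed.

Lemma escape vs q dx dy : inside vs q -> 1 <= Rabs dx + Rabs dy ->
  (forall K t, 0 <= K -> 0 <= t <= 1 ->
      ~ on_boundary vs (fst q + K * t * dx, snd q + K * t * dy)) -> False.
Proof.
  intros [_ [M HM]] Hd Hav.
  set (K := Rabs M + Rabs (fst q) + Rabs (snd q) + 1).
  assert (HK : 0 <= K) by (unfold K; pose proof (Rabs_pos M); pose proof (Rabs_pos (fst q)); pose proof (Rabs_pos (snd q)); lra).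
  specialize (HM (fun t => fst q + K * t * dx) (fun t => snd q + K * t * dy)).
  assert (C1 : forall t, continuity_pt (fun t => fst q + K * t * dx) t).
  { intro t. apply continuity_pt_plus. apply continuity_pt_const. intros x y; reflexivity.
    apply continuity_pt_mult. apply continuity_pt_mult. apply continuity_pt_const. intros x y; reflexivity.
    apply derivable_continuous_pt, derivable_pt_id. apply continuity_pt_const. intros x y; reflexivity. }
  assert (C2 : forall t, continuity_pt (fun t => snd q + K * t * dy) t).
  { intro t. apply continuity_pt_plus. apply continuity_pt_const. intros x y; reflexivity.
    apply continuity_pt_mult. apply continuity_pt_mult. apply continuity_pt_const. intros x y; reflexivity.
    apply derivable_continuous_pt, derivable_pt_id. apply continuity_pt_const. intros x y; reflexivity. }
  specialize (HM C1 C2).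
  assert (E1 : fst q + K * 0 * dx = fst q) by ring.
  assert (E2 : snd q + K * 0 * dy = snd q) by ring.
  specialize (HM E1 E2).
  assert (H : Rabs (fst q + K * 1 * dx) + Rabs (snd q + K * 1 * dy) <= M).
  { apply HM. intros t Ht. apply Hav; assumption. }
  assert (A1 : Rabs (K * 1 * dx) <= Rabs (fst q + K * 1 * dx) + Rabs (fst q)).
  { pose proof (Rabs_triang (fst q + K * 1 * dx) (- fst q)) as T.
    rewrite Rabs_Ropp in T. replace (fst q + K * 1 * dx + - fst q) with (K * 1 * dx) in T by ring. exact T. }
  assert (A2 : Rabs (K * 1 * dy) <= Rabs (snd q + K * 1 * dy) + Rabs (snd q)).
  { pose proof (Rabs_triang (snd q + K * 1 * dy) (- snd q)) as T.
    rewrite Rabs_Ropp in T. replace (snd q + K * 1 * dy + - snd q) with (K * 1 * dy) in T by ring. exact T. }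
  rewrite !Rmult_1_r in H. rewrite !Rmult_1_r, !Rabs_mult, (Rabs_right K) in A1, A2 by lra.
  pose proof (Rle_abs M).
  assert (K * (Rabs dx + Rabs dy) >= K) by nra.
  unfold K in *. lra.
Qed.

Definition hf (a b : R) (z : point) : R := a * fst z + b * snd z.
Definition dirok (a b : R) : Prop :=
  (a = 0 /\ (b = 1 \/ b = -1)) \/ (b = 0 /\ (a = 1 \/ a = -1)).
Definition Ext vs a b i : Prop :=
  (i < length vs)%nat /\ hf a b (vtx vs i) = hf a b (vtx vs (enext vs i)) /\
  forall q, region vs q -> hf a b (vtx vs i) <= hf a b q.

Lemma dirok_abs a b : dirok a b -> 1 <= Rabs (-a) + Rabs (-b).
Proof.
  intros [[-> [-> | ->]] | [-> [-> | ->]]]; unfold Rabs;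
  repeat match goal with |- context [Rcase_abs ?x] => destruct (Rcase_abs x) end; lra.
Qed.

Lemma dirok_perp a b : dirok a b -> dirok b (-a).
Proof. intros [[-> [-> | ->]] | [-> [-> | ->]]]; unfold dirok; lra. Qed.

Lemma seg_hf a b u w z : seg u w z -> exists t, 0 <= t <= 1 /\ hf a b z = hf a b u + t * (hf a b w - hf a b u).
Proof. intros [t [Ht [H1 H2]]]. exists t. split; [exact Ht|]. unfold hf. rewrite H1, H2. ring. Qed.

Lemma boundary_bound vs a b c z :
  (forall k, (k < length vs)%nat -> c <= hf a b (vtx vs k)) ->
  on_boundary vs z -> c <= hf a b z.
Proof.
  intros Hk [i [Hi He]]. unfold on_edge in He. destruct (seg_hf a b _ _ _ He) as [t [Ht E]].
  rewrite E. pose proof (Hk i Hi). pose proof (Hk _ (enext_lt vs i Hi)). nra.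
Qed.

Lemma region_bound vs a b c z : dirok a b ->
  (forall k, (k < length vs)%nat -> c <= hf a b (vtx vs k)) ->
  region vs z -> c <= hf a b z.
Proof.
  intros Hd Hk [Hb | Hin]. - eapply boundary_bound; eauto.
  - destruct (Rle_lt_dec c (hf a b z)) as [|Hlt]; [assumption|]. exfalso.
    apply (escape vs z (-a) (-b) Hin (dirok_abs a b Hd)).
    intros K t HK Ht Hbd. apply (boundary_bound vs a b c _ Hk) in Hbd.
    unfold hf in Hbd, Hlt. simpl in Hbd.
    assert (0 <= K * t) by nra. assert (0 <= a * a + b * b) by nra. nra.
Qed.

Lemma collinear_hf a b u v w : dirok a b -> hf a b u = hf a b v -> hf a b u = hf a b w -> collinear u v w.
Proof.
  unfold collinear, hf. intros [[-> [-> | ->]] | [-> [-> | ->]]] H1 H2.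
  - assert (snd v = snd u) by lra. assert (snd w = snd u) by lra. rewrite H, H0. ring.
  - assert (snd v = snd u) by lra. assert (snd w = snd u) by lra. rewrite H, H0. ring.
  - assert (fst v = fst u) by lra. assert (fst w = fst u) by lra. rewrite H, H0. ring.
  - assert (fst v = fst u) by lra. assert (fst w = fst u) by lra. rewrite H, H0. ring.
Qed.

Lemma rect_hf vs a b i : dirok a b -> rectilinear vs -> (i < length vs)%nat ->
  hf a b (vtx vs i) = hf a b (vtx vs (enext vs i)) \/
  hf b (-a) (vtx vs i) = hf b (-a) (vtx vs (enext vs i)).
Proof.
  intros Hd Hr Hi. destruct (Hr i Hi) as [E | E]; unfold hf; rewrite E;
  destruct Hd as [[-> [-> | ->]] | [-> [-> | ->]]]; first [left; ring | right; ring | idtac].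
Qed.

Lemma vertex_on_ext vs a b c j : dirok a b -> simple_polygon vs -> rectilinear vs ->
  (forall k, (k < length vs)%nat -> c <= hf a b (vtx vs k)) ->
  (j < length vs)%nat -> hf a b (vtx vs j) = c ->
  exists i, Ext vs a b i /\ on_edge vs i (vtx vs j).
Proof.
  intros Hd [[H3 [Hnd Hs]] Hgp] Hr Hk Hj Hc.
  assert (Bd : forall i, (i < length vs)%nat -> hf a b (vtx vs i) = c ->
     forall q, region vs q -> hf a b (vtx vs i) <= hf a b q).
  { intros i Hi E q Hq. rewrite E. eapply region_bound; eauto. }
  destruct (rect_hf vs a b j Hd Hr Hj) as [E1 | E1].
  - exists j. split. + split; [exact Hj|]. split; [exact E1|]. apply Bd; auto.
    + apply seg_start.
  - pose proof (prev_lt vs j Hj) as Hp. pose proof (enext_prev vs j Hj) as Ep.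
    destruct (rect_hf vs a b (prev vs j) Hd Hr Hp) as [E2 | E2].
    + exists (prev vs j). rewrite Ep in E2. split.
      * split; [exact Hp|]. rewrite Ep. split; [exact E2|]. apply Bd; auto. congruence.
      * unfold on_edge. rewrite Ep. apply seg_end.
    + exfalso. rewrite Ep in E2.
      apply (Hgp (prev vs j) j (enext vs j) Hp Hj (enext_lt vs j Hj)).
      * apply prev_neq; lia.
      * intro H. apply (enext_neq vs j); [lia|exact Hj|symmetry; exact H].
      * apply prev_enext_neq; lia.
      * apply (collinear_hf b (-a)); [apply dirok_perp; exact Hd | exact E2 | congruence].
Qed.

Lemma min_index (f : nat -> R) n : (0 < n)%nat -> exists j, (j < n)%nat /\ forall k, (k < n)%nat -> f j <= f k.
Proof.
  induction n as [|n IH]; intro H; [lia|].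
  destruct (Nat.eq_dec n 0) as [->|Hn].
  - exists 0%nat. split; [lia|]. intros k Hk. assert (k = 0%nat) by lia. subst. lra.
  - destruct (IH ltac:(lia)) as [j [Hj Hm]].
    destruct (Rle_lt_dec (f j) (f n)).
    + exists j. split; [lia|]. intros k Hk. destruct (Nat.eq_dec k n); [subst; assumption|]. apply Hm; lia.
    + exists n. split; [lia|]. intros k Hk. destruct (Nat.eq_dec k n); [subst; lra|].
      specialize (Hm k ltac:(lia)). lra.
Qed.

Lemma ext_exists vs a b : dirok a b -> simple_polygon vs -> rectilinear vs -> exists i, Ext vs a b i.
Proof.
  intros Hd Hp Hr. assert (Hn : (0 < length vs)%nat) by (destruct Hp as [[H _] _]; lia).
  destruct (min_index (fun k => hf a b (vtx vs k)) _ Hn) as [j [Hj Hm]].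
  destruct (vertex_on_ext vs a b (hf a b (vtx vs j)) j Hd Hp Hr Hm Hj eq_refl) as [i [Hi _]].
  exists i; exact Hi.
Qed.

Lemma ext_vbound vs a b i0 : Ext vs a b i0 ->
  forall k, (k < length vs)%nat -> hf a b (vtx vs i0) <= hf a b (vtx vs k).
Proof. intros [_ [_ H]] k Hk. apply H. apply vtx_region; exact Hk. Qed.

Lemma ext_contains vs a b i0 z : dirok a b -> simple_polygon vs -> rectilinear vs ->
  Ext vs a b i0 -> region vs z -> hf a b z = hf a b (vtx vs i0) ->
  exists i, Ext vs a b i /\ on_edge vs i z.
Proof.
  intros Hd Hp Hr He Hz Hc. set (c := hf a b (vtx vs i0)) in *.
  pose proof (ext_vbound vs a b i0 He) as Hk. fold c in Hk.
  destruct Hz as [Hb | Hin].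
  - destruct Hb as [k [Hkn Hke]]. unfold on_edge in Hke.
    pose proof (enext_lt vs k Hkn) as Hkn'.
    destruct (Req_dec (hf a b (vtx vs k)) (hf a b (vtx vs (enext vs k)))) as [E|E].
    + exists k. split; [|exact Hke]. split; [exact Hkn|]. split; [exact E|].
      destruct (seg_hf a b _ _ _ Hke) as [t [Ht Et]].
      intros q Hq. assert (hf a b (vtx vs k) = c) by (rewrite Et, <- E in Hc; lra).
      rewrite H. eapply region_bound; eauto.
    + destruct Hke as [t [Ht [H1 H2]]].
      pose proof (Hk k Hkn) as B1. pose proof (Hk _ Hkn') as B2.
      assert (Hz : hf a b z = hf a b (vtx vs k) + t * (hf a b (vtx vs (enext vs k)) - hf a b (vtx vs k)))
        by (unfold hf; rewrite H1, H2; ring).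
      destruct (Req_dec t 0) as [T0|T0].
      * assert (z = vtx vs k). { destruct z; simpl in *; subst t. rewrite H1, H2. destruct (vtx vs k); simpl; f_equal; ring. }
        subst z. eapply vertex_on_ext; eauto; lra.
      * destruct (Req_dec t 1) as [T1|T1].
        -- assert (z = vtx vs (enext vs k)). { destruct z; simpl in *; subst t. rewrite H1, H2. destruct (vtx vs (enext vs k)); simpl; f_equal; ring. }
           subst z. eapply vertex_on_ext; eauto; lra.
        -- exfalso. apply E. assert (0 < t < 1) by lra. nra.
  - exfalso. apply (escape vs z (-a) (-b) Hin (dirok_abs a b Hd)).
    intros K t HK Ht Hbd.
    destruct (Req_dec (K * t) 0) as [Z|Z].
    + destruct Hin as [Hnb _]. apply Hnb. destruct z as [zx zy]; simpl in *.
      replace (zx + K * t * - a) with zx in Hbd by (replace (K * t * - a) with (- (K*t) * a) by ring; rewrite Z; ring).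
      replace (zy + K * t * - b) with zy in Hbd by (replace (K * t * - b) with (- (K*t) * b) by ring; rewrite Z; ring). exact Hbd.
    + apply (boundary_bound vs a b c _ Hk) in Hbd. unfold hf in Hbd, Hc. simpl in Hbd.
      assert (0 < K * t) by (assert (0 <= K * t) by nra; lra).
      assert (1 <= a * a + b * b) by (destruct Hd as [[-> [-> | ->]] | [-> [-> | ->]]]; lra).
      nra.
Qed.

Lemma ext_left vs i : Ext vs 1 0 i <-> left_edge vs i.
Proof. unfold Ext, left_edge, hf. split; intros [H1 [H2 H3]]; split; auto; split.
  lra. intros q Hq; specialize (H3 q Hq); lra. lra. intros q Hq; specialize (H3 q Hq); lra. Qed.
Lemma ext_right vs i : Ext vs (-1) 0 i <-> right_edge vs i.
Proof. unfold Ext, right_edge, hf. split; intros [H1 [H2 H3]]; split; auto; split.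
  lra. intros q Hq; specialize (H3 q Hq); lra. lra. intros q Hq; specialize (H3 q Hq); lra. Qed.
Lemma ext_bottom vs i : Ext vs 0 1 i <-> bottom_edge vs i.
Proof. unfold Ext, bottom_edge, hf. split; intros [H1 [H2 H3]]; split; auto; split.
  lra. intros q Hq; specialize (H3 q Hq); lra. lra. intros q Hq; specialize (H3 q Hq); lra. Qed.
Lemma ext_top vs i : Ext vs 0 (-1) i <-> top_edge vs i.
Proof. unfold Ext, top_edge, hf. split; intros [H1 [H2 H3]]; split; auto; split.
  lra. intros q Hq; specialize (H3 q Hq); lra. lra. intros q Hq; specialize (H3 q Hq); lra. Qed.

Lemma dirok_10 : dirok 1 0. Proof. unfold dirok; lra. Qed.
Lemma dirok_m10 : dirok (-1) 0. Proof. unfold dirok; lra. Qed.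
Lemma dirok_01 : dirok 0 1. Proof. unfold dirok; lra. Qed.
Lemma dirok_0m1 : dirok 0 (-1). Proof. unfold dirok; lra. Qed.

Lemma ext_xtype vs a i : (a = 1 \/ a = -1) -> Ext vs a 0 i -> extreme_edge vs i /\ fst (vtx vs i) = fst (vtx vs (enext vs i)).
Proof.
  intros [-> | ->] He.
  - split. left. apply ext_left; exact He. destruct He as [_ [E _]]. unfold hf in E. lra.
  - split. right; left. apply ext_right; exact He. destruct He as [_ [E _]]. unfold hf in E. lra.
Qed.
Lemma ext_ytype vs b i : (b = 1 \/ b = -1) -> Ext vs 0 b i -> extreme_edge vs i /\ snd (vtx vs i) = snd (vtx vs (enext vs i)).
Proof.
  intros [-> | ->] He.
  - split. right; right; left. apply ext_bottom; exact He. destruct He as [_ [E _]]. unfold hf in E. lra.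
  - split. right; right; right. apply ext_top; exact He. destruct He as [_ [E _]]. unfold hf in E. lra.
Qed.

Lemma nth_inj_vtx vs i j : NoDup vs -> (i < length vs)%nat -> (j < length vs)%nat -> vtx vs i = vtx vs j -> i = j.
Proof. intros Hnd Hi Hj E. exact (proj1 (NoDup_nth vs (0,0)) Hnd i j Hi Hj E). Qed.

Lemma corner vs a b i j z : simple_polygon vs -> (a = 1 \/ a = -1) -> (b = 1 \/ b = -1) ->
  Ext vs a 0 i -> Ext vs 0 b j -> on_edge vs i z -> on_edge vs j z -> has_extreme_corner vs.
Proof.
  intros [[H3 [Hnd Hs]] Hgp] Ha Hb Hi Hj Hzi Hzj.
  destruct (ext_xtype vs a i Ha Hi) as [Xi Fi]. destruct (ext_ytype vs b j Hb Hj) as [Xj Fj].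
  assert (Hin : (i < length vs)%nat) by (destruct Hi; auto).
  assert (Hjn : (j < length vs)%nat) by (destruct Hj; auto).
  assert (Hij : i <> j).
  { intro E. subst j. apply (enext_neq vs i); [lia|exact Hin|].
    apply (nth_inj_vtx vs); auto. apply enext_lt; auto.
    destruct (vtx vs i), (vtx vs (enext vs i)); simpl in *; subst; reflexivity. }
  destruct (Hs i j Hin Hjn Hij z Hzi Hzj) as [[E1 E2] | [E1 E2]].
  - exists i, j, (vtx vs j). split; [exact Hij|]. split; [exact Xi|]. split; [exact Xj|].
    split. exists j; auto. split. right; congruence. left; reflexivity.
  - exists i, j, (vtx vs i). split; [exact Hij|]. split; [exact Xi|]. split; [exact Xj|].
    split. exists i; auto. split. left; reflexivity. right; congruence.
Qed.

Definition VCf (A : point -> Prop) : Prop :=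
  forall x y1 y2 y, A (x, y1) -> A (x, y2) -> y1 <= y <= y2 -> A (x, y).
Definition HCf (A : point -> Prop) : Prop :=
  forall y x1 x2 x, A (x1, y) -> A (x2, y) -> x1 <= x <= x2 -> A (x, y).

Lemma l1_triang a b c : l1 a c <= l1 a b + l1 b c.
Proof. unfold l1.
  pose proof (Rabs_triang (fst a - fst b) (fst b - fst c)).
  pose proof (Rabs_triang (snd a - snd b) (snd b - snd c)).
  replace (fst a - fst b + (fst b - fst c)) with (fst a - fst c) in H by ring.
  replace (snd a - snd b + (snd b - snd c)) with (snd a - snd c) in H0 by ring. lra. Qed.

Lemma l1_refl a : l1 a a = 0.
Proof. unfold l1. rewrite !Rminus_diag, Rabs_R0. ring. Qed.

Lemma plen_split m : forall p d z, In z (p :: m) ->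
  l1 p z + l1 z (last (p :: m) d) <= plen (p :: m).
Proof.
  induction m as [|b m IH]; intros p d z Hz.
  - destruct Hz as [<-|[]]. simpl. rewrite l1_refl. lra.
  - change (plen (p :: b :: m)) with (l1 p b + plen (b :: m)).
    change (last (p :: b :: m) d) with (last (b :: m) d).
    destruct Hz as [<- | Hz].
    + pose proof (IH b d b (or_introl eq_refl)). rewrite l1_refl in *.
      pose proof (l1_triang p b (last (b :: m) d)). lra.
    + pose proof (IH b d z Hz). pose proof (l1_triang p b z). lra.
Qed.

Lemma div01 a b : 0 <= a <= b -> 0 < b -> 0 <= a / b <= 1.
Proof.
  intros [H1 H2] Hb. unfold Rdiv. pose proof (Rinv_0_lt_compat b Hb). split.
  - apply Rmult_le_pos; lra.
  - replace 1 with (b * / b) by (field; lra). apply Rmult_le_compat_r; lra.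
Qed.

Definition betw (a b y : R) : Prop := (a <= y <= b) \/ (b <= y <= a).

Lemma seg_vert a b y : fst a = fst b -> betw (snd a) (snd b) y -> seg a b (fst a, y).
Proof.
  intros Ex Hy. destruct (Req_dec (snd a) (snd b)) as [E|E].
  - exists 0. split; [lra|]. simpl. split; [ring|]. destruct Hy; lra.
  - exists ((y - snd a) / (snd b - snd a)). simpl. split.
    + destruct Hy as [Hy|Hy].
      * assert (0 < snd b - snd a) by lra. apply div01; lra.
      * assert (snd b - snd a < 0) by lra.
        replace ((y - snd a) / (snd b - snd a)) with ((snd a - y) / (snd a - snd b)) by (field; lra).
        apply div01; lra.
    + split. rewrite Ex. ring. field. lra.
Qed.

Lemma seg_horz a b x : snd a = snd b -> betw (fst a) (fst b) x -> seg a b (x, snd a).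
Proof.
  intros Ey Hx. destruct (Req_dec (fst a) (fst b)) as [E|E].
  - exists 0. split; [lra|]. simpl. split; [destruct Hx; lra|ring].
  - exists ((x - fst a) / (fst b - fst a)). simpl. split.
    + destruct Hx as [Hx|Hx].
      * assert (0 < fst b - fst a) by lra. apply div01; lra.
      * assert (fst b - fst a < 0) by lra.
        replace ((x - fst a) / (fst b - fst a)) with ((fst a - x) / (fst a - fst b)) by (field; lra).
        apply div01; lra.
    + split. field. lra. rewrite Ey. ring.
Qed.

Lemma cover_vert (A : point -> Prop) m : forall p d, path_in A (p :: m) ->
  (forall z, In z (p :: m) -> fst z = fst p) ->
  forall y, betw (snd p) (snd (last (p :: m) d)) y -> A (fst p, y).
Proof.
  induction m as [|b m IH]; intros p d Hp Hx y Hy.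
  - simpl in Hp, Hy. destruct p as [px py]. simpl in *. assert (y = py) by (destruct Hy; lra). subst. exact Hp.
  - destruct Hp as [Hs Hp]. change (last (p :: b :: m) d) with (last (b :: m) d) in Hy.
    assert (Eb : fst b = fst p) by (apply Hx; right; left; reflexivity).
    destruct (classic (betw (snd p) (snd b) y)) as [H|H].
    + apply Hs. apply seg_vert; [congruence|exact H].
    + rewrite <- Eb. apply (IH b d Hp).
      * intros z Hz. rewrite Eb. apply Hx. right; exact Hz.
      * unfold betw in *. lra.
Qed.

Lemma cover_horz (A : point -> Prop) m : forall p d, path_in A (p :: m) ->
  (forall z, In z (p :: m) -> snd z = snd p) ->
  forall x, betw (fst p) (fst (last (p :: m) d)) x -> A (x, snd p).
Proof.
  induction m as [|b m IH]; intros p d Hp Hx x Hy.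
  - simpl in Hp, Hy. destruct p as [px py]. simpl in *. assert (x = px) by (destruct Hy; lra). subst. exact Hp.
  - destruct Hp as [Hs Hp]. change (last (p :: b :: m) d) with (last (b :: m) d) in Hy.
    assert (Eb : snd b = snd p) by (apply Hx; right; left; reflexivity).
    destruct (classic (betw (fst p) (fst b) x)) as [H|H].
    + apply Hs. apply seg_horz; [congruence|exact H].
    + rewrite <- Eb. apply (IH b d Hp).
      * intros z Hz. rewrite Eb. apply Hx. right; exact Hz.
      * unfold betw in *. lra.
Qed.

Lemma rc_VC A : rect_convex A -> VCf A.
Proof.
  intros Hrc x y1 y2 y H1 H2 Hy.
  destruct (Hrc (x, y1) (x, y2) H1 H2) as [m [Hl [_ [Hpl Hpi]]]].
  assert (Hx : forall z, In z ((x, y1) :: m) -> fst z = fst (x, y1)).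
  { intros z Hz. pose proof (plen_split m (x, y1) (x, y1) z Hz) as P. rewrite Hl, Hpl in P.
    unfold l1 in P. simpl in *. rewrite Rminus_diag, Rabs_R0 in P.
    pose proof (Rabs_triang (y1 - snd z) (snd z - y2)).
    replace (y1 - snd z + (snd z - y2)) with (y1 - y2) in H by ring.
    pose proof (Rabs_pos (x - fst z)). pose proof (Rabs_pos (fst z - x)).
    assert (HZ : Rabs (x - fst z) = 0) by lra.
    revert HZ; unfold Rabs; destruct Rcase_abs; intros; simpl; lra. }
  pose proof (cover_vert A m (x, y1) (x, y1) Hpi Hx y) as C. rewrite Hl in C. simpl in C.
  apply C. left; exact Hy.
Qed.

Lemma rc_HC A : rect_convex A -> HCf A.
Proof.
  intros Hrc y x1 x2 x H1 H2 Hy.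
  destruct (Hrc (x1, y) (x2, y) H1 H2) as [m [Hl [_ [Hpl Hpi]]]].
  assert (Hx : forall z, In z ((x1, y) :: m) -> snd z = snd (x1, y)).
  { intros z Hz. pose proof (plen_split m (x1, y) (x1, y) z Hz) as P. rewrite Hl, Hpl in P.
    unfold l1 in P. simpl in *. rewrite Rminus_diag, Rabs_R0 in P.
    pose proof (Rabs_triang (x1 - fst z) (fst z - x2)).
    replace (x1 - fst z + (fst z - x2)) with (x1 - x2) in H by ring.
    pose proof (Rabs_pos (y - snd z)). pose proof (Rabs_pos (snd z - y)).
    assert (HZ : Rabs (y - snd z) = 0) by lra.
    revert HZ; unfold Rabs; destruct Rcase_abs; intros; simpl; lra. }
  pose proof (cover_horz A m (x1, y) (x1, y) Hpi Hx x) as C. rewrite Hl in C. simpl in C.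
  apply C. left; exact Hy.
Qed.

Lemma disc_aux (P : nat -> bool) n k0 : (0 < n)%nat -> (k0 < n)%nat -> P k0 = true ->
  forall j, P ((k0 + j) mod n) = false ->
  exists k, (k < n)%nat /\ P k = true /\ P (S k mod n) = false.
Proof.
  intros Hn Hk0 Hp j. induction j as [|j IH]; intro Hf.
  - rewrite Nat.add_0_r, Nat.mod_small in Hf by exact Hk0. congruence.
  - destruct (P ((k0 + j) mod n)) eqn:E.
    + exists ((k0 + j) mod n). split. apply Nat.mod_upper_bound; lia. split; [exact E|].
      replace (S ((k0 + j) mod n)) with (1 + (k0 + j) mod n)%nat by lia.
      rewrite Nat.Div0.add_mod_idemp_r. replace (1 + (k0 + j))%nat with (k0 + S j)%nat by lia. exact Hf.
    + apply IH; reflexivity.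
Qed.

Lemma disc_ivt (P : nat -> bool) n a b : (a < n)%nat -> (b < n)%nat -> P a = true -> P b = false ->
  exists k, (k < n)%nat /\ P k = true /\ P (S k mod n) = false.
Proof.
  intros Ha Hb Pa Pb. apply (disc_aux P n a ltac:(lia) Ha Pa (b + n - a)).
  replace (a + (b + n - a))%nat with (b + 1 * n)%nat by lia.
  rewrite Nat.Div0.mod_add, Nat.mod_small by exact Hb. exact Pb.
Qed.

Lemma onedge_region vs i z : (i < length vs)%nat -> on_edge vs i z -> region vs z.
Proof. intros Hi H. left. exists i. auto. Qed.

Lemma interior_at vs x0 a b : simple_boundary vs -> rectilinear vs ->
  VCf (region vs) -> HCf (region vs) ->
  (a < length vs)%nat -> fst (vtx vs a) < x0 ->
  (b < length vs)%nat -> x0 < fst (vtx vs b) ->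
  (forall k, (k < length vs)%nat -> fst (vtx vs k) <> x0) ->
  exists z, Defs.interior (region vs) z /\ fst z = x0.
Proof.
  intros [H3 [Hnd Hs]] Hr HV HH Ha Pa Hb Pb Hnv.
  set (n := length vs) in *.
  set (P := fun k => if Rlt_dec (fst (vtx vs k)) x0 then true else false).
  assert (PT : forall k, P k = true -> fst (vtx vs k) < x0).
  { intros k. unfold P. destruct (Rlt_dec (fst (vtx vs k)) x0); congruence. }
  assert (PF : forall k, (k < n)%nat -> P k = false -> x0 < fst (vtx vs k)).
  { intros k Hk. unfold P. destruct (Rlt_dec (fst (vtx vs k)) x0); [congruence|].
    intros _. specialize (Hnv k Hk). lra. }
  assert (Pa' : P a = true) by (unfold P; destruct (Rlt_dec (fst (vtx vs a)) x0); [reflexivity|lra]).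
  assert (Pb' : P b = false) by (unfold P; destruct (Rlt_dec (fst (vtx vs b)) x0); [lra|reflexivity]).
  destruct (disc_ivt P n a b Ha Hb Pa' Pb') as [k1 [Hk1 [P1 Q1]]].
  destruct (disc_ivt (fun k => negb (P k)) n b a Hb Ha ltac:(cbv beta; rewrite Pb'; reflexivity) ltac:(cbv beta; rewrite Pa'; reflexivity))
    as [k2 [Hk2 [P2 Q2]]].
  apply Bool.negb_true_iff in P2. apply Bool.negb_false_iff in Q2.
  change (S k1 mod n)%nat with (enext vs k1) in Q1. change (S k2 mod n)%nat with (enext vs k2) in Q2.
  pose proof (enext_lt vs k1 Hk1) as Hk1'. pose proof (enext_lt vs k2 Hk2) as Hk2'.
  apply PT in P1. apply (PF _ Hk1') in Q1. apply (PF _ Hk2) in P2. apply PT in Q2.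
  set (A1 := vtx vs k1) in *. set (B1 := vtx vs (enext vs k1)) in *.
  set (A2 := vtx vs k2) in *. set (B2 := vtx vs (enext vs k2)) in *.
  assert (Y1 : snd A1 = snd B1). { destruct (Hr k1 Hk1) as [E|E]; [fold A1 B1 in E; lra | exact E]. }
  assert (Y2 : snd A2 = snd B2). { destruct (Hr k2 Hk2) as [E|E]; [fold A2 B2 in E; lra | exact E]. }
  assert (E1 : forall x, fst A1 <= x <= fst B1 -> on_edge vs k1 (x, snd A1)).
  { intros x Hx. apply seg_horz; [exact Y1 | left; exact Hx]. }
  assert (E2 : forall x, fst B2 <= x <= fst A2 -> on_edge vs k2 (x, snd A2)).
  { intros x Hx. apply seg_horz; [exact Y2 | right; exact Hx]. }
  assert (Hk12 : k1 <> k2).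
  { intro E. subst k2. unfold A1 in P1. unfold A2 in P2. lra. }
  assert (Hy : snd A1 <> snd A2).
  { intro E. destruct (Hs k1 k2 Hk1 Hk2 Hk12 (x0, snd A1) (E1 x0 ltac:(lra)) ltac:(rewrite E; apply E2; lra))
      as [[_ F] | [_ F]].
    - apply (Hnv k2 Hk2). rewrite <- F. reflexivity.
    - apply (Hnv k1 Hk1). rewrite <- F. reflexivity. }
  set (u := Rmax (fst A1) (fst B2)). set (w := Rmin (fst B1) (fst A2)).
  assert (Hu : u < x0) by (apply Rmax_lub_lt; lra).
  assert (Hw : x0 < w) by (apply Rmin_glb_lt; lra).
  assert (Hu1 : fst A1 <= u) by apply Rmax_l. assert (Hu2 : fst B2 <= u) by apply Rmax_r.
  assert (Hw1 : w <= fst B1) by apply Rmin_l. assert (Hw2 : w <= fst A2) by apply Rmin_r.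
  assert (R1 : forall x, u <= x <= w -> region vs (x, snd A1)).
  { intros x Hx. apply (onedge_region vs k1); auto. apply E1; lra. }
  assert (R2 : forall x, u <= x <= w -> region vs (x, snd A2)).
  { intros x Hx. apply (onedge_region vs k2); auto. apply E2; lra. }
  set (ylo := Rmin (snd A1) (snd A2)). set (yhi := Rmax (snd A1) (snd A2)).
  assert (Rlo : forall x, u <= x <= w -> region vs (x, ylo)).
  { intros x Hx. unfold ylo, Rmin. destruct (Rle_dec (snd A1) (snd A2)); auto. }
  assert (Rhi : forall x, u <= x <= w -> region vs (x, yhi)).
  { intros x Hx. unfold yhi, Rmax. destruct (Rle_dec (snd A1) (snd A2)); auto. }
  assert (Hlh : ylo < yhi).
  { unfold ylo, yhi, Rmin, Rmax. destruct (Rle_dec (snd A1) (snd A2)); lra. }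
  assert (Hlm : ylo < (snd A1 + snd A2) / 2 < yhi).
  { unfold ylo, yhi, Rmin, Rmax. destruct (Rle_dec (snd A1) (snd A2)); lra. }
  assert (Hmid : (snd A1 + snd A2) / 2 - ylo = (yhi - ylo) / 2).
  { unfold ylo, yhi, Rmin, Rmax. destruct (Rle_dec (snd A1) (snd A2)); lra. }
  exists (x0, (snd A1 + snd A2) / 2). split; [|reflexivity].
  exists (Rmin (Rmin (x0 - u) (w - x0)) ((yhi - ylo) / 2)). split.
  - apply Rmin_glb_lt; [apply Rmin_glb_lt|]; lra.
  - intros q Hqx Hqy. simpl in Hqx, Hqy.
    pose proof (Rmin_l (Rmin (x0 - u) (w - x0)) ((yhi - ylo) / 2)).
    pose proof (Rmin_r (Rmin (x0 - u) (w - x0)) ((yhi - ylo) / 2)).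
    pose proof (Rmin_l (x0 - u) (w - x0)). pose proof (Rmin_r (x0 - u) (w - x0)).
    apply Rabs_def2 in Hqx. apply Rabs_def2 in Hqy.
    destruct q as [qx qy]. simpl in *.
    apply (HH qy u w qx).
    + apply (HV u ylo yhi qy); [apply Rlo | apply Rhi | ]; lra.
    + apply (HV w ylo yhi qy); [apply Rlo | apply Rhi | ]; lra.
    + lra.
Qed.

Definition sw (z : point) : point := (snd z, fst z).
Lemma sw_sw z : sw (sw z) = z. Proof. destruct z; reflexivity. Qed.
Lemma map_sw_sw vs : map sw (map sw vs) = vs.
Proof. rewrite map_map. erewrite map_ext; [apply map_id|]. intro; apply sw_sw. Qed.
Lemma len_sw vs : length (map sw vs) = length vs. Proof. apply length_map. Qed.
Lemma vtx_sw vs i : vtx (map sw vs) i = sw (vtx vs i).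
Proof. unfold vtx. change (0, 0) with (sw (0, 0)) at 1. apply map_nth. Qed.
Lemma enext_sw vs i : enext (map sw vs) i = enext vs i.
Proof. unfold enext. rewrite len_sw. reflexivity. Qed.
Lemma seg_sw a b z : seg a b z -> seg (sw a) (sw b) (sw z).
Proof. intros [t [Ht [H1 H2]]]. exists t. simpl. auto. Qed.
Lemma seg_sw' a b z : seg (sw a) (sw b) (sw z) -> seg a b z.
Proof. intro H. apply seg_sw in H. rewrite !sw_sw in H. exact H. Qed.
Lemma onedge_sw vs i z : on_edge vs i z -> on_edge (map sw vs) i (sw z).
Proof. unfold on_edge. rewrite enext_sw, !vtx_sw. apply seg_sw. Qed.
Lemma onedge_sw' vs i z : on_edge (map sw vs) i (sw z) -> on_edge vs i z.
Proof. unfold on_edge. rewrite enext_sw, !vtx_sw. apply seg_sw'. Qed.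
Lemma bd_sw vs z : on_boundary vs z <-> on_boundary (map sw vs) (sw z).
Proof. split; intros [i [Hi He]]; exists i; rewrite len_sw in *; split; auto.
  apply onedge_sw; auto. apply onedge_sw'; auto. Qed.

Lemma inside_sw vs z : inside vs z -> inside (map sw vs) (sw z).
Proof.
  intros [Hnb [M HM]]. split. { rewrite <- bd_sw. exact Hnb. }
  exists M. intros f g Cf Cg F0 G0 Hav.
  assert (H := HM g f Cg Cf G0 F0). rewrite Rplus_comm. apply H.
  intros t Ht Hb. apply (Hav t Ht). apply (proj1 (bd_sw vs (g t, f t))) in Hb. exact Hb.
Qed.

Lemma region_sw vs z : region vs z <-> region (map sw vs) (sw z).
Proof.
  split.
  - intros [H|H]; [left; apply (proj1 (bd_sw vs z)); exact H | right; apply inside_sw; exact H].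
  - intros [H|H].
    + left. apply (proj2 (bd_sw vs z)); exact H.
    + right. apply inside_sw in H. rewrite map_sw_sw, sw_sw in H. exact H.
Qed.

Lemma interior_sw (A B : point -> Prop) z : (forall p, B p <-> A (sw p)) ->
  Defs.interior A z -> Defs.interior B (sw z).
Proof.
  intros E [e [He H]]. exists e. split; [exact He|]. intros q H1 H2.
  apply E. apply H; simpl in *; assumption.
Qed.

Lemma simple_sw vs : simple_boundary vs -> simple_boundary (map sw vs).
Proof.
  intros [H3 [Hnd Hs]]. rewrite <- (map_sw_sw vs) in Hnd. apply NoDup_map_inv in Hnd.
  split; [rewrite len_sw; exact H3|]. split; [exact Hnd|].
  intros i j Hi Hj Hij p Hpi Hpj. rewrite len_sw in Hi, Hj. rewrite !enext_sw, !vtx_sw.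
  rewrite <- (sw_sw p) in Hpi, Hpj. apply onedge_sw' in Hpi. apply onedge_sw' in Hpj.
  destruct (Hs i j Hi Hj Hij _ Hpi Hpj) as [[E1 E2]|[E1 E2]].
  - left. split; [exact E1|]. rewrite <- E2, sw_sw. reflexivity.
  - right. split; [exact E1|]. rewrite <- E2, sw_sw. reflexivity.
Qed.

Lemma rect_sw vs : rectilinear vs -> rectilinear (map sw vs).
Proof. intros H i Hi. rewrite len_sw in Hi. rewrite enext_sw, !vtx_sw. simpl.
  destruct (H i Hi); [right|left]; assumption. Qed.

Lemma VC_sw vs : HCf (region vs) -> VCf (region (map sw vs)).
Proof. intros H x y1 y2 y H1 H2 Hy. change (x, y) with (sw (y, x)). apply (proj1 (region_sw vs (y, x))).
  change (x, y1) with (sw (y1, x)) in H1. change (x, y2) with (sw (y2, x)) in H2.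
  apply (proj2 (region_sw vs _)) in H1. apply (proj2 (region_sw vs _)) in H2. exact (H x y1 y2 y H1 H2 Hy). Qed.
Lemma HC_sw vs : VCf (region vs) -> HCf (region (map sw vs)).
Proof. intros H y x1 x2 x H1 H2 Hy. change (x, y) with (sw (y, x)). apply (proj1 (region_sw vs (y, x))).
  change (x1, y) with (sw (y, x1)) in H1. change (x2, y) with (sw (y, x2)) in H2.
  apply (proj2 (region_sw vs _)) in H1. apply (proj2 (region_sw vs _)) in H2. exact (H y x1 x2 x H1 H2 Hy). Qed.

Lemma interior_at_y vs y0 a b : simple_boundary vs -> rectilinear vs ->
  VCf (region vs) -> HCf (region vs) ->
  (a < length vs)%nat -> snd (vtx vs a) < y0 ->
  (b < length vs)%nat -> y0 < snd (vtx vs b) ->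
  (forall k, (k < length vs)%nat -> snd (vtx vs k) <> y0) ->
  exists z, Defs.interior (region vs) z /\ snd z = y0.
Proof.
  intros Hs Hr HV HH Ha Pa Hb Pb Hnv.
  destruct (interior_at (map sw vs) y0 a b (simple_sw vs Hs) (rect_sw vs Hr) (VC_sw vs HH) (HC_sw vs HV))
    as [z [Hz Ez]]; rewrite ?len_sw, ?vtx_sw; auto.
  - intros k Hk. rewrite vtx_sw. apply Hnv; exact Hk.
  - exists (sw z). split.
    + apply (interior_sw (region (map sw vs))); [|exact Hz].
      intro p. rewrite (region_sw vs p). reflexivity.
    + exact Ez.
Qed.

Definition inproj (g : point -> R) (s : point * point) (w : R) : Prop := betw (g (fst s)) (g (snd s)) w.

Lemma seg_betw_fst a b x : seg a b x -> betw (fst a) (fst b) (fst x).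
Proof. intros [t [Ht [H1 H2]]]. rewrite H1. unfold betw.
  destruct (Rle_dec (fst a) (fst b)); [left|right]; split; nra. Qed.
Lemma seg_betw_snd a b x : seg a b x -> betw (snd a) (snd b) (snd x).
Proof. intros [t [Ht [H1 H2]]]. rewrite H2. unfold betw.
  destruct (Rle_dec (snd a) (snd b)); [left|right]; split; nra. Qed.

Lemma avoid_list V : forall u v, u < v -> exists x, u < x < v /\ ~ In x V.
Proof.
  induction V as [|a V IH]; intros u v H.
  - exists ((u + v) / 2). split; [lra|]. intros [].
  - destruct (Rlt_dec u a) as [H1|H1]; [destruct (Rlt_dec a v) as [H2|H2]|].
    + destruct (IH u a H1) as [x [Hx Hn]]. exists x. split; [lra|]. intros [E|E]; [lra|contradiction].
    + destruct (IH u v H) as [x [Hx Hn]]. exists x. split; [lra|]. intros [E|E]; [lra|contradiction].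
    + destruct (IH u v H) as [x [Hx Hn]]. exists x. split; [lra|]. intros [E|E]; [lra|contradiction].
Qed.

Lemma sep_list g w S : (exists s, In s S /\ inproj g s w) \/
  (exists d, 0 < d /\ forall x, Rabs (x - w) < d -> forall s, In s S -> ~ inproj g s x).
Proof.
  induction S as [|s S IH].
  - right. exists 1. split; [lra|]. intros x _ s [].
  - destruct IH as [[s' [H1 H2]]|[d [Hd H]]].
    + left. exists s'. split; [right|]; assumption.
    + destruct (classic (inproj g s w)) as [Hs|Hs].
      * left. exists s. split; [left; reflexivity|exact Hs].
      * right. unfold inproj, betw in Hs.
        set (a := g (fst s)) in *. set (b := g (snd s)) in *.
        assert (Hout : w < Rmin a b \/ Rmax a b < w).
        { unfold Rmin, Rmax. destruct (Rle_dec a b); lra. }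
        pose proof (Rmin_l a b). pose proof (Rmin_r a b). pose proof (Rmax_l a b). pose proof (Rmax_r a b).
        destruct Hout as [Ho|Ho].
        -- exists (Rmin d (Rmin a b - w)). split; [apply Rmin_glb_lt; lra|].
           pose proof (Rmin_l d (Rmin a b - w)). pose proof (Rmin_r d (Rmin a b - w)).
           intros x Hx s' [<-|Hs'].
           ++ apply Rabs_def2 in Hx. unfold inproj, betw. fold a b. lra.
           ++ apply (H x); [|exact Hs']. lra.
        -- exists (Rmin d (w - Rmax a b)). split; [apply Rmin_glb_lt; lra|].
           pose proof (Rmin_l d (w - Rmax a b)). pose proof (Rmin_r d (w - Rmax a b)).
           intros x Hx s' [<-|Hs'].
           ++ apply Rabs_def2 in Hx. unfold inproj, betw. fold a b. lra.
           ++ apply (H x); [|exact Hs']. lra.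
Qed.

Lemma closure_cov g S lo hi V : lo < hi ->
  (forall x0, lo < x0 < hi -> ~ In x0 V -> exists s, In s S /\ inproj g s x0) ->
  forall w, lo <= w <= hi -> exists s, In s S /\ inproj g s w.
Proof.
  intros Hlh Hc w Hw. destruct (sep_list g w S) as [H|[d [Hd H]]]; [exact H|].
  exfalso.
  destruct (avoid_list V (Rmax lo (w - d)) (Rmin hi (w + d))) as [x [Hx Hn]].
  { apply Rmax_lub_lt; apply Rmin_glb_lt; lra. }
  pose proof (Rmax_l lo (w - d)). pose proof (Rmax_r lo (w - d)).
  pose proof (Rmin_l hi (w + d)). pose proof (Rmin_r hi (w + d)).
  destruct (Hc x ltac:(lra) Hn) as [s [Hs Hp]].
  apply (H x) with s; auto. apply Rabs_def1; lra.
Qed.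

Lemma interior_self A z : Defs.interior A z -> A z.
Proof. intros [e [He H]]. apply H; rewrite Rminus_diag, Rabs_R0; lra. Qed.

Lemma notin_vtx_fst vs x0 : ~ In x0 (map fst vs) -> forall k, (k < length vs)%nat -> fst (vtx vs k) <> x0.
Proof. intros Hn k Hk E. apply Hn. rewrite <- E. apply in_map. apply nth_In. exact Hk. Qed.
Lemma notin_vtx_snd vs x0 : ~ In x0 (map snd vs) -> forall k, (k < length vs)%nat -> snd (vtx vs k) <> x0.
Proof. intros Hn k Hk E. apply Hn. rewrite <- E. apply in_map. apply nth_In. exact Hk. Qed.

Lemma covx vs S iL iR xL xR yB yT : simple_boundary vs -> rectilinear vs ->
  VCf (region vs) -> HCf (region vs) -> is_skeleton vs S ->
  (iL < length vs)%nat -> fst (vtx vs iL) = xL -> (iR < length vs)%nat -> fst (vtx vs iR) = xR ->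
  (forall z, region vs z -> xL <= fst z <= xR /\ yB <= snd z <= yT) -> xL < xR ->
  forall w, xL <= w <= xR -> exists s, In s S /\ inproj fst s w.
Proof.
  intros Hs Hr HV HH [_ Hsk] HiL EL HiR ER Hbox Hlr.
  apply (closure_cov fst S xL xR (map fst vs) Hlr).
  intros x0 Hx0 Hn.
  destruct (interior_at vs x0 iL iR Hs Hr HV HH HiL ltac:(lra) HiR ltac:(lra) (notin_vtx_fst vs x0 Hn))
    as [z [Hz Ez]].
  pose proof (Hbox z (interior_self _ _ Hz)) as Bz.
  set (p := (x0, yB - 1)). set (q := (x0, yT + 1)).
  assert (Hzpq : seg p q z).
  { destruct z as [zx zy]. simpl in Ez, Bz. subst zx. apply (seg_vert p q zy); unfold p, q; simpl; [reflexivity|]. left; lra. }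
  assert (Np : ~ Defs.interior (region vs) p).
  { intro H. apply interior_self in H. apply Hbox in H. simpl in H. lra. }
  assert (Nq : ~ Defs.interior (region vs) q).
  { intro H. apply interior_self in H. apply Hbox in H. simpl in H. lra. }
  assert (Cp : lcorner p q p) by (left; reflexivity).
  destruct (Hsk p q Np Nq) with (c := p) as [s [x [Hs1 [Hl Hx]]]].
  - intros c [-> | ->]; exists z; split; auto; first [left; exact Hzpq | right; exact Hzpq].
  - exact Cp.
  - exists s. split; [exact Hs1|]. unfold inproj. apply seg_betw_fst in Hx.
    assert (fst x = x0).
    { destruct Hl as [Hl|Hl]; destruct Hl as [t [_ [H1 _]]]; rewrite H1; simpl; ring. }
    rewrite <- H. exact Hx.
Qed.

Lemma covy vs S iB iT xL xR yB yT : simple_boundary vs -> rectilinear vs ->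
  VCf (region vs) -> HCf (region vs) -> is_skeleton vs S ->
  (iB < length vs)%nat -> snd (vtx vs iB) = yB -> (iT < length vs)%nat -> snd (vtx vs iT) = yT ->
  (forall z, region vs z -> xL <= fst z <= xR /\ yB <= snd z <= yT) -> yB < yT ->
  forall w, yB <= w <= yT -> exists s, In s S /\ inproj snd s w.
Proof.
  intros Hs Hr HV HH [_ Hsk] HiB EB HiT ET Hbox Hlr.
  apply (closure_cov snd S yB yT (map snd vs) Hlr).
  intros y0 Hy0 Hn.
  destruct (interior_at_y vs y0 iB iT Hs Hr HV HH HiB ltac:(lra) HiT ltac:(lra) (notin_vtx_snd vs y0 Hn))
    as [z [Hz Ez]].
  pose proof (Hbox z (interior_self _ _ Hz)) as Bz.
  set (p := (xL - 1, y0)). set (q := (xR + 1, y0)).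
  assert (Hzpq : seg p q z).
  { destruct z as [zx zy]. simpl in Ez, Bz. subst zy. apply (seg_horz p q zx); unfold p, q; simpl; [reflexivity|]. left; lra. }
  assert (Np : ~ Defs.interior (region vs) p).
  { intro H. apply interior_self in H. apply Hbox in H. simpl in H. lra. }
  assert (Nq : ~ Defs.interior (region vs) q).
  { intro H. apply interior_self in H. apply Hbox in H. simpl in H. lra. }
  assert (Cp : lcorner p q p) by (right; reflexivity).
  destruct (Hsk p q Np Nq) with (c := p) as [s [x [Hs1 [Hl Hx]]]].
  - intros c [-> | ->]; exists z; split; auto; first [left; exact Hzpq | right; exact Hzpq].
  - exact Cp.
  - exists s. split; [exact Hs1|]. unfold inproj. apply seg_betw_snd in Hx.
    assert (snd x = y0).
    { destruct Hl as [Hl|Hl]; destruct Hl as [t [_ [_ H1]]]; rewrite H1; simpl; ring. }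
    rewrite <- H. exact Hx.
Qed.

Lemma ratio b q t : betw b q t -> t <> b ->
  q - b <> 0 /\ 0 <= (t - b) / (q - b) <= 1 /\ (t - b) / (q - b) * (q - b) = t - b.
Proof.
  intros [H|H] Htb.
  - assert (q - b <> 0) by lra. split; [lra|]. split.
    + apply div01; lra.
    + field; lra.
  - assert (q - b <> 0) by lra. split; [lra|]. split.
    + replace ((t - b) / (q - b)) with ((b - t) / (b - q)) by (field; lra). apply div01; lra.
    + field; lra.
Qed.

Lemma inside_ends A a b : seg_inside A a b -> A a /\ A b.
Proof. intro H. split; apply H; [apply seg_start | apply seg_end]. Qed.

Lemma GL (A : point -> Prop) B Q1 T Q2 yB yT : VCf A -> yB < yT ->
  seg_inside A B Q1 -> seg_inside A T Q2 -> snd B = yB -> snd T = yT ->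
  yB <= snd Q1 <= yT -> yB <= snd Q2 <= yT ->
  betw (fst B) (fst Q1) (fst T) -> betw (fst T) (fst Q2) (fst B) ->
  seg_inside A B T.
Proof.
  intros HV Hy H1 H2 EB ET Q1y Q2y Bt1 Bt2 z [l [Hl [Zx Zy]]].
  destruct (inside_ends A B Q1 H1) as [AB _]. destruct (inside_ends A T Q2 H2) as [AT _].
  destruct z as [zx zy]. simpl in Zx, Zy. subst zx zy.
  destruct (Req_dec (fst T) (fst B)) as [Et|Et].
  - rewrite Et, Rminus_diag, Rmult_0_r, Rplus_0_r.
    apply (HV (fst B) (snd B) (snd T)).
    + destruct B; exact AB.
    + rewrite <- Et. destruct T; exact AT.
    + rewrite EB, ET. nra.
  - destruct (ratio _ _ _ Bt1 Et) as [N1 [[R1a R1b] R1e]].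
    destruct (ratio _ _ _ Bt2 ltac:(lra)) as [N2 [[R2a R2b] R2e]].
    set (r1 := (fst T - fst B) / (fst Q1 - fst B)) in *.
    set (r2 := (fst B - fst T) / (fst Q2 - fst T)) in *.
    set (m1 := l * r1). set (m2 := (1 - l) * r2).
    assert (A1 : A (fst B + m1 * (fst Q1 - fst B), snd B + m1 * (snd Q1 - snd B))).
    { apply H1. exists m1. split; [unfold m1; split; nra|]. simpl. split; reflexivity. }
    assert (A2 : A (fst T + m2 * (fst Q2 - fst T), snd T + m2 * (snd Q2 - snd T))).
    { apply H2. exists m2. split; [unfold m2; split; nra|]. simpl. split; reflexivity. }
    assert (X1 : fst B + m1 * (fst Q1 - fst B) = fst B + l * (fst T - fst B)).
    { unfold m1. rewrite Rmult_assoc, R1e. reflexivity. }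
    assert (X2 : fst T + m2 * (fst Q2 - fst T) = fst B + l * (fst T - fst B)).
    { unfold m2. rewrite Rmult_assoc, R2e. ring. }
    rewrite X1 in A1. rewrite X2 in A2.
    apply (HV _ _ _ _ A1 A2). rewrite EB, ET in *. unfold m1, m2. split.
    + assert (l * r1 <= l) by nra. assert (0 <= l * r1) by nra. nra.
    + assert ((1 - l) * r2 <= 1 - l) by nra. assert (0 <= (1 - l) * r2) by nra. nra.
Qed.

Definition endp (s : point * point) (B Q : point) : Prop :=
  (B = fst s /\ Q = snd s) \/ (B = snd s /\ Q = fst s).

Lemma endp_inside A s B Q : seg_inside A (fst s) (snd s) -> endp s B Q -> seg_inside A B Q.
Proof. intros H [[-> ->]|[-> ->]]; [exact H|]. intros z Hz. apply H, seg_sym, Hz. Qed.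

Lemma endp_betw g s B Q w : endp s B Q -> inproj g s w -> betw (g B) (g Q) w.
Proof. unfold inproj, betw. intros [[-> ->]|[-> ->]]; lra. Qed.

Lemma find_end g s w : inproj g s w -> ((w <= g (fst s) /\ w <= g (snd s)) \/ (g (fst s) <= w /\ g (snd s) <= w)) ->
  exists B Q, endp s B Q /\ g B = w.
Proof.
  unfold inproj, betw. intros H1 H2.
  destruct (Req_dec (g (fst s)) w).
  - exists (fst s), (snd s). split; [left; split; reflexivity | assumption].
  - exists (snd s), (fst s). split; [right; split; reflexivity | lra].
Qed.

Lemma two_elems {T} (S : list T) s1 s2 : (length S <= 2)%nat -> In s1 S -> In s2 S -> s1 <> s2 ->
  forall s, In s S -> s = s1 \/ s = s2.
Proof.
  intros Hl H1 H2 Hn s Hs. destruct S as [|x [|y [|z r]]]; simpl in *.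
  - contradiction.
  - intuition congruence.
  - intuition congruence.
  - lia.
Qed.

Lemma ASH (A : point -> Prop) xL xR yB yT S : VCf A -> xL < xR -> yB < yT ->
  (forall z, A z -> xL <= fst z <= xR /\ yB <= snd z <= yT) ->
  ~ A (xL, yB) -> ~ A (xR, yB) -> ~ A (xL, yT) -> ~ A (xR, yT) ->
  (length S <= 2)%nat -> (forall s, In s S -> seg_inside A (fst s) (snd s)) ->
  (forall w, xL <= w <= xR -> exists s, In s S /\ inproj fst s w) ->
  (forall w, yB <= w <= yT -> exists s, In s S /\ inproj snd s w) ->
  exists a b, a <> b /\ seg_inside A a b /\ snd a = yB /\ snd b = yT.
Proof.
  intros HV Hx Hy Hbox C1 C2 C3 C4 Hl HS Cx Cy.
  assert (Ends : forall s, In s S -> A (fst s) /\ A (snd s)) by (intros s Hs; apply inside_ends, HS, Hs).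
  destruct (Cy yB ltac:(lra)) as [s1 [Hs1 P1]].
  destruct (find_end snd s1 yB P1) as [B [Q1 [En1 EB]]].
  { left. destruct (Ends s1 Hs1) as [Ea Eb]. apply Hbox in Ea, Eb. lra. }
  destruct (Cy yT ltac:(lra)) as [s2 [Hs2 P2]].
  destruct (find_end snd s2 yT P2) as [T [Q2 [En2 ET]]].
  { right. destruct (Ends s2 Hs2) as [Ea Eb]. apply Hbox in Ea, Eb. lra. }
  assert (I1 : seg_inside A B Q1) by (eapply endp_inside; [apply HS, Hs1 | exact En1]).
  assert (I2 : seg_inside A T Q2) by (eapply endp_inside; [apply HS, Hs2 | exact En2]).
  destruct (inside_ends _ _ _ I1) as [AB AQ1]. destruct (inside_ends _ _ _ I2) as [AT AQ2].
  pose proof (Hbox _ AB) as BB. pose proof (Hbox _ AQ1) as BQ1.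
  pose proof (Hbox _ AT) as BT. pose proof (Hbox _ AQ2) as BQ2.
  assert (BneT : B <> T) by (intro E; subst; lra).
  exists B, T. split; [exact BneT|]. split; [|split; assumption].
  destruct (classic (s1 = s2)) as [E|E].
  - subst s2. destruct En1 as [[E1 E2]|[E1 E2]]; destruct En2 as [[E3 E4]|[E3 E4]].
    + exfalso. apply BneT. congruence.
    + rewrite E1, E3. apply HS, Hs1.
    + rewrite E1, E3. intros z Hz. apply HS with s1; [exact Hs1|]. apply seg_sym, Hz.
    + exfalso. apply BneT. congruence.
  - pose proof (two_elems S s1 s2 Hl Hs1 Hs2 E) as Two.
    assert (Gen : forall w, xL <= w <= xR -> betw (fst B) (fst Q1) w \/ betw (fst T) (fst Q2) w).
    { intros w Hw. destruct (Cx w Hw) as [s [Hs Ps]]. destruct (Two s Hs) as [Es|Es]; subst s.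
      - left. eapply endp_betw; eauto.
      - right. eapply endp_betw; eauto. }
    assert (NB : fst B <> xL /\ fst B <> xR).
    { split; intro F; [apply C1 | apply C2]; rewrite <- F, <- EB; destruct B; exact AB. }
    assert (NT : fst T <> xL /\ fst T <> xR).
    { split; intro F; [apply C3 | apply C4]; rewrite <- F, <- ET; destruct T; exact AT. }
    assert (GL1 : fst Q1 = xL \/ fst Q2 = xL).
    { destruct (Gen xL ltac:(lra)) as [G|G]; unfold betw in G; lra. }
    assert (GR1 : fst Q1 = xR \/ fst Q2 = xR).
    { destruct (Gen xR ltac:(lra)) as [G|G]; unfold betw in G; lra. }
    apply (GL A B Q1 T Q2 yB yT HV Hy I1 I2 EB ET ltac:(lra) ltac:(lra)).
    + destruct GL1 as [G1|G1]; destruct GR1 as [G2|G2]; try lra.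
      *
        destruct (Rle_dec (fst T) (fst B)). { right. lra. }
        destruct (Gen ((fst T + fst B) / 2) ltac:(lra)) as [G|G]; unfold betw in G; lra.
      * destruct (Rle_dec (fst B) (fst T)). { left. lra. }
        destruct (Gen ((fst T + fst B) / 2) ltac:(lra)) as [G|G]; unfold betw in G; lra.
    + destruct GL1 as [G1|G1]; destruct GR1 as [G2|G2]; try lra.
      * destruct (Rle_dec (fst T) (fst B)). { left. lra. }
        destruct (Gen ((fst T + fst B) / 2) ltac:(lra)) as [G|G]; unfold betw in G; lra.
      * destruct (Rle_dec (fst B) (fst T)). { right. lra. }
        destruct (Gen ((fst T + fst B) / 2) ltac:(lra)) as [G|G]; unfold betw in G; lra.
Qed.

Lemma ASV (A : point -> Prop) xL xR yB yT S : HCf A -> xL < xR -> yB < yT ->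
  (forall z, A z -> xL <= fst z <= xR /\ yB <= snd z <= yT) ->
  ~ A (xL, yB) -> ~ A (xR, yB) -> ~ A (xL, yT) -> ~ A (xR, yT) ->
  (length S <= 2)%nat -> (forall s, In s S -> seg_inside A (fst s) (snd s)) ->
  (forall w, xL <= w <= xR -> exists s, In s S /\ inproj fst s w) ->
  (forall w, yB <= w <= yT -> exists s, In s S /\ inproj snd s w) ->
  exists a b, a <> b /\ seg_inside A a b /\ fst a = xL /\ fst b = xR.
Proof.
  intros HH Hx Hy Hbox C1 C2 C3 C4 Hl HS Cx Cy.
  set (f := fun s : point * point => (sw (fst s), sw (snd s))).
  destruct (ASH (fun z => A (sw z)) yB yT xL xR (map f S)) as [a [b [Hab [Hi [Ea Eb]]]]].
  - intros x y1 y2 y H1 H2 Hyy. simpl in *. exact (HH x y1 y2 y H1 H2 Hyy).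
  - exact Hy.
  - exact Hx.
  - intros z Hz. apply Hbox in Hz. destruct z; simpl in *; lra.
  - exact C1.
  - exact C3.
  - exact C2.
  - exact C4.
  - rewrite length_map. exact Hl.
  - intros s Hs. apply in_map_iff in Hs. destruct Hs as [s0 [<- Hs0]]. simpl.
    intros z Hz. rewrite <- (sw_sw z) in Hz. apply seg_sw' in Hz. apply (HS s0 Hs0) in Hz. exact Hz.
  - intros w Hw. destruct (Cy w Hw) as [s [Hs Ps]]. exists (f s). split; [apply in_map; exact Hs|].
    exact Ps.
  - intros w Hw. destruct (Cx w Hw) as [s [Hs Ps]]. exists (f s). split; [apply in_map; exact Hs|].
    exact Ps.
  - exists (sw a), (sw b). split; [|split; [|split; assumption]].
    + intro E. apply Hab. rewrite <- (sw_sw a), <- (sw_sw b), E. reflexivity.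
    + intros z Hz. rewrite <- (sw_sw z) in Hz. apply seg_sw' in Hz. apply Hi in Hz. rewrite sw_sw in Hz. exact Hz.
Qed.

Theorem corollary2 (vs : list point) (S : list (point * point)) :
  general_obstacle vs -> ~ has_cross vs -> min_skeleton vs S ->
  (3 <= length S)%nat.
Proof.
  intros [Hsp [Hr [Hrc Hnc]]] Hncr [Hsk _].
  destruct (le_lt_dec 3 (length S)) as [Hl|Hl]; [exact Hl|]. exfalso. apply Hncr.
  assert (Hl2 : (length S <= 2)%nat) by lia.
  pose proof Hsp as [Hsb Hgp]. pose proof Hsb as [H3 [Hnd _]].
  pose proof (rc_VC _ Hrc) as HV. pose proof (rc_HC _ Hrc) as HH.
  destruct (ext_exists vs 1 0 dirok_10 Hsp Hr) as [iL EL].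
  destruct (ext_exists vs (-1) 0 dirok_m10 Hsp Hr) as [iR ER].
  destruct (ext_exists vs 0 1 dirok_01 Hsp Hr) as [iB EB].
  destruct (ext_exists vs 0 (-1) dirok_0m1 Hsp Hr) as [iT ET].
  pose proof EL as [HiL [FL BL]]. pose proof ER as [HiR [FR BR]].
  pose proof EB as [HiB [FB BB]]. pose proof ET as [HiT [FT BT]].
  unfold hf in FL, FR, FB, FT, BL, BR, BB, BT.
  set (xL := fst (vtx vs iL)). set (xR := fst (vtx vs iR)).
  set (yB := snd (vtx vs iB)). set (yT := snd (vtx vs iT)).
  assert (Hbox : forall z, region vs z -> xL <= fst z <= xR /\ yB <= snd z <= yT).
  { intros z Hz. specialize (BL z Hz). specialize (BR z Hz). specialize (BB z Hz). specialize (BT z Hz).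
    unfold xL, xR, yB, yT. lra. }
  assert (Hxlr : xL < xR).
  { pose proof (Hbox _ (vtx_region vs iB HiB)) as P1.
    pose proof (Hbox _ (vtx_region vs _ (enext_lt vs iB HiB))) as P2.
    destruct (Req_dec (fst (vtx vs iB)) (fst (vtx vs (enext vs iB)))) as [E|E].
    - exfalso. apply (enext_neq vs iB); [lia|exact HiB|].
      apply (nth_inj_vtx vs); auto. apply enext_lt; auto.
      destruct (vtx vs iB) as [a1 a2], (vtx vs (enext vs iB)) as [b1 b2]; simpl in *.
      f_equal; lra.
    - lra. }
  assert (Hylr : yB < yT).
  { pose proof (Hbox _ (vtx_region vs iL HiL)) as P1.
    pose proof (Hbox _ (vtx_region vs _ (enext_lt vs iL HiL))) as P2.
    destruct (Req_dec (snd (vtx vs iL)) (snd (vtx vs (enext vs iL)))) as [E|E].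
    - exfalso. apply (enext_neq vs iL); [lia|exact HiL|].
      apply (nth_inj_vtx vs); auto. apply enext_lt; auto.
      destruct (vtx vs iL) as [a1 a2], (vtx vs (enext vs iL)) as [b1 b2]; simpl in *.
      f_equal; lra.
    - lra. }
  pose proof (covx vs S iL iR xL xR yB yT Hsb Hr HV HH Hsk HiL eq_refl HiR eq_refl Hbox Hxlr) as Cx.
  pose proof (covy vs S iB iT xL xR yB yT Hsb Hr HV HH Hsk HiB eq_refl HiT eq_refl Hbox Hylr) as Cy.
  assert (HS : forall s, In s S -> seg_inside (region vs) (fst s) (snd s)).
  { intros s Hs. destruct Hsk as [Hsk1 _]. apply Hsk1; exact Hs. }
  assert (Corner : forall a b ia ib z, (a = 1 \/ a = -1) -> (b = 1 \/ b = -1) ->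
     Ext vs a 0 ia -> Ext vs 0 b ib -> region vs z ->
     hf a 0 z = hf a 0 (vtx vs ia) -> hf 0 b z = hf 0 b (vtx vs ib) -> False).
  { intros a b ia ib z Ha Hb Ea Eb Hz E1 E2.
    assert (Da : dirok a 0) by (unfold dirok; lra). assert (Db : dirok 0 b) by (unfold dirok; lra).
    destruct (ext_contains vs a 0 ia z Da Hsp Hr Ea Hz E1) as [i [Ei Oi]].
    destruct (ext_contains vs 0 b ib z Db Hsp Hr Eb Hz E2) as [j [Ej Oj]].
    apply Hnc. exact (corner vs a b i j z Hsp Ha Hb Ei Ej Oi Oj). }
  assert (C1 : ~ region vs (xL, yB)).
  { intro Hz. apply (Corner 1 1 iL iB _ ltac:(lra) ltac:(lra) EL EB Hz); unfold hf, xL, yB; simpl; ring. }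
  assert (C2 : ~ region vs (xR, yB)).
  { intro Hz. apply (Corner (-1) 1 iR iB _ ltac:(lra) ltac:(lra) ER EB Hz); unfold hf, xR, yB; simpl; ring. }
  assert (C3 : ~ region vs (xL, yT)).
  { intro Hz. apply (Corner 1 (-1) iL iT _ ltac:(lra) ltac:(lra) EL ET Hz); unfold hf, xL, yT; simpl; ring. }
  assert (C4 : ~ region vs (xR, yT)).
  { intro Hz. apply (Corner (-1) (-1) iR iT _ ltac:(lra) ltac:(lra) ER ET Hz); unfold hf, xR, yT; simpl; ring. }
  destruct (ASH (region vs) xL xR yB yT S HV Hxlr Hylr Hbox C1 C2 C3 C4 Hl2 HS Cx Cy)
    as [a [b [Hab [Hiab [Ea Eb]]]]].
  destruct (ASV (region vs) xL xR yB yT S HH Hxlr Hylr Hbox C1 C2 C3 C4 Hl2 HS Cx Cy)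
    as [c [d [Hcd [Hicd [Ec Ed]]]]].
  destruct (inside_ends _ _ _ Hiab) as [Ra Rb]. destruct (inside_ends _ _ _ Hicd) as [Rc Rd].
  destruct (ext_contains vs 0 1 iB a dirok_01 Hsp Hr EB Ra) as [i1 [E1 O1]].
  { unfold hf. fold yB. lra. }
  destruct (ext_contains vs 0 (-1) iT b dirok_0m1 Hsp Hr ET Rb) as [i2 [E2 O2]].
  { unfold hf. fold yT. lra. }
  destruct (ext_contains vs 1 0 iL c dirok_10 Hsp Hr EL Rc) as [i3 [E3 O3]].
  { unfold hf. fold xL. lra. }
  destruct (ext_contains vs (-1) 0 iR d dirok_m10 Hsp Hr ER Rd) as [i4 [E4 O4]].
  { unfold hf. fold xR. lra. }
  split.
  - exists a, b, i1, i2. split; [exact Hab|]. split; [exact Hiab|].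
    split; [apply ext_bottom; exact E1|]. split; [apply ext_top; exact E2|]. split; assumption.
  - exists c, d, i3, i4. split; [exact Hcd|]. split; [exact Hicd|].
    split; [apply ext_left; exact E3|]. split; [apply ext_right; exact E4|]. split; assumption.
Qed.
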